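(* For $n\ge 0$ and a field $k$, let $V_n(k)=M_n(k)\oplus k^n\oplus (k^n)^*$ be the space of triples $\Sigma=(A,B,C)$ with $A\in M_n(k)$, $B\in k^n$ (column), $C\in (k^n)^*$ (row), with $GL_n(k)$ acting by $g\cdot(A,B,C)=(gAg^{-1},gB,Cg^{-1})$. Call $\Sigma$ completely controllable if the $n\times n$ matrix $[B\ AB\ \cdots\ A^{n-1}B]$ is invertible, and completely observable if the $n\times n$ matrix with rows $C, CA,\dots,CA^{n-1}$ is invertible. Let $\mathrm{sys}^{cc}_n$ and $\mathrm{sys}^{co}_n$ be the orbit spaces of the completely controllable, resp. completely observable, triples, and $\overline{M}$ the disjoint union over $n\ge0$ of $\mathrm{sys}^{cc}_n\cup\mathrm{sys}^{co}_n$. Then $\overline{M}$ is of $\mathbb{F}_1$-type: for every finite field $\mathbb{F}_q$, the number of $\mathbb{F}_q$-points of $\mathrm{sys}^{cc}_n\cup\mathrm{sys}^{co}_n$ is $q^{2n}+q^{2n-1}$ for $n\ge1$ (and $1$ for $n=0$), so that $\#\overline{M}(\mathbb{F}_q)=\sum_{k\ge0}q^k$; consequently its $\mathbb{F}_1$-motive is $\prod_{k=0}^{\infty}\frac{s-k}{2\pi}$.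
   Context: The $\mathbb{F}_q$-points of these orbit spaces are the $GL_n(\mathbb{F}_q)$-orbits of triples over $\mathbb{F}_q$ that are completely controllable or completely observable. A variety (or countable disjoint union of varieties) $X$ is of $\mathbb{F}_1$-type if there are integers $a_k$ with $\#X(\mathbb{F}_q)=\sum_k a_kq^k$ for all finite fields $\mathbb{F}_q$; its (Manin) $\mathbb{F}_1$-motive is then $\prod_k\left(\frac{s-k}{2\pi}\right)^{a_k}$ (e.g. the motive of $\mathbb{A}^n$ is $\frac{s-n}{2\pi}$ and that of $\mathbb{P}^n$ is $\prod_{k=0}^n\frac{s-k}{2\pi}$). *)

(* Defs.v *)
From HB Require Import structures.
From mathcomp Require Import all_boot all_order all_algebra all_field.
Set Implicit Arguments. Unset Strict Implicit. Unset Printing Implicit Defensive.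
Import GRing.Theory.
Local Open Scope ring_scope.

Definition triple (F : fieldType) (n : nat) : Type :=
  ('M[F]_n * 'cV[F]_n * 'rV[F]_n)%type.

Definition trA {F : fieldType} {n} (s : triple F n) : 'M[F]_n := s.1.1.
Definition trB {F : fieldType} {n} (s : triple F n) : 'cV[F]_n := s.1.2.
Definition trC {F : fieldType} {n} (s : triple F n) : 'rV[F]_n := s.2.

Definition ctrl_mx {F : fieldType} {n} (s : triple F n) : 'M[F]_n :=
  \matrix_(i < n, j < n) ((trA s ^+ j) *m trB s) i 0.

Definition obs_mx {F : fieldType} {n} (s : triple F n) : 'M[F]_n :=
  \matrix_(i < n, j < n) (trC s *m (trA s ^+ i)) 0 j.

Definition completely_controllable {F : fieldType} {n} (s : triple F n) : bool :=
  ctrl_mx s \in unitmx.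
Definition completely_observable {F : fieldType} {n} (s : triple F n) : bool :=
  obs_mx s \in unitmx.

Definition gl_act {F : fieldType} {n} (g : 'M[F]_n) (s : triple F n) : triple F n :=
  (g *m trA s *m invmx g, g *m trB s, trC s *m invmx g).

Definition gl_orbit (F : finFieldType) (n : nat) (s : triple F n) : {set triple F n} :=
  [set t | [exists g : 'M[F]_n, (g \in unitmx) && (t == gl_act g s)]].

Definition sys_points (F : finFieldType) (n : nat) : {set {set triple F n}} :=
  [set gl_orbit s | s in [pred s : triple F n |
                          completely_controllable s || completely_observable s]].

Definition num_sys_points (F : finFieldType) (n : nat) : nat := #|sys_points F n|.

(* Main.v *)
Require Import Defs.
From mathcomp Require Import all_boot all_order all_algebra all_field.
From mathcomp Require Import zify.
Set Implicit Arguments. Unset Strict Implicit. Unset Printing Implicit Defensive.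
Import GRing.Theory.
Local Open Scope ring_scope.


Section PolyPart.
Variable F : finFieldType.

Definition pol m (u : 'rV[F]_m) : {poly F} := \sum_(i < m) u 0 i *: 'X^i.
Definition rowp m (f : {poly F}) : 'rV[F]_m := \row_(i < m) f`_i.
Definition mon m (u : 'rV[F]_m) : {poly F} := 'X^m + pol u.

Lemma coef_pol_lt m (u : 'rV[F]_m) i (hi : (i < m)%N) :
  (pol u)`_i = u 0 (Ordinal hi).
Proof.
rewrite /pol coef_sum.
under eq_bigr => j _ do rewrite coefZ coefXn.
rewrite (bigD1 (Ordinal hi)) //= eqxx mulr1 big1 ?addr0 //.
by move=> j; rewrite -val_eqE /= eq_sym => /negbTE ->; rewrite mulr0.
Qed.

Lemma coef_pol_ge m (u : 'rV[F]_m) i : (m <= i)%N -> (pol u)`_i = 0.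
Proof.
move=> hi; rewrite /pol coef_sum big1 // => j _; rewrite coefZ coefXn.
case: eqP => [ij|]; last by rewrite mulr0.
by move: (ltn_ord j); rewrite -ij ltnNge hi.
Qed.

Lemma size_pol m (u : 'rV[F]_m) : (size (pol u) <= m)%N.
Proof. by apply/leq_sizeP => j hj; rewrite coef_pol_ge. Qed.

Lemma pol_rowp m (f : {poly F}) : (size f <= m)%N -> pol (rowp m f) = f.
Proof.
move=> hs; apply/polyP => i.
case: (ltnP i m) => hi; first by rewrite (coef_pol_lt _ hi) mxE.
by rewrite coef_pol_ge // nth_default // (leq_trans hs).
Qed.

Lemma rowp_pol m (u : 'rV[F]_m) : rowp m (pol u) = u.
Proof.
apply/rowP => i; rewrite mxE (coef_pol_lt _ (ltn_ord i)).
by congr (u 0 _); apply/val_inj.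
Qed.

Lemma pol_inj m : injective (@pol m).
Proof. by move=> u v e; rewrite -(rowp_pol u) e rowp_pol. Qed.

Lemma size_mon m (u : 'rV[F]_m) : size (mon u) = m.+1.
Proof.
by rewrite /mon size_addl size_polyXn // ltnS size_pol.
Qed.

Lemma mon_monic m (u : 'rV[F]_m) : mon u \is monic.
Proof.
by rewrite monicE /mon lead_coefDl ?lead_coefXn // size_polyXn ltnS size_pol.
Qed.

Lemma mon_neq0 m (u : 'rV[F]_m) : mon u != 0.
Proof. by rewrite -size_poly_eq0 size_mon. Qed.

Lemma mon_inj m : injective (@mon m).
Proof. by move=> u v /addrI; apply: pol_inj. Qed.

Lemma size_sub_monic m (p : {poly F}) :
  p \is monic -> size p = m.+1 -> (size (p - 'X^m)%R <= m)%N.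
Proof.
move=> mp sp; apply/leq_sizeP => j hj; rewrite coefB coefXn.
case: (ltngtP j m) => [|hjm|->]; first by rewrite ltnNge hj.
  by rewrite nth_default ?sp // subr0.
by move: mp; rewrite monicE /lead_coef sp => /eqP ->; rewrite subrr.
Qed.

Lemma mon_rowp m (p : {poly F}) :
  p \is monic -> size p = m.+1 -> mon (rowp m (p - 'X^m)) = p.
Proof.
move=> mp sp; rewrite /mon pol_rowp ?size_sub_monic //.
by rewrite addrC subrK.
Qed.

End PolyPart.


Section Rec.
Variable F : finFieldType.
Local Notation q := #|F|.

Definition Ecop n : {set 'rV[F]_n * 'rV[F]_n} :=
  [set x | coprimep (mon x.1) (pol x.2)].
Definition Ncop n := #|Ecop n|.
Definition Efib n k : {set 'rV[F]_n * 'rV[F]_n} :=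
  [set x | size (gcdp (mon x.1) (pol x.2)) == k.+1].

Definition phi n k (z : 'rV[F]_k * ('rV[F]_(n - k) * 'rV[F]_(n - k))) :
  'rV[F]_n * 'rV[F]_n :=
  (rowp n (mon z.1 * mon z.2.1 - 'X^n), rowp n (mon z.1 * pol z.2.2)).

Arguments phi n k z : clear implicits.

Lemma phi1 n k z : (k <= n)%N -> mon (phi n k z).1 = mon z.1 * mon z.2.1.
Proof.
move=> hk; rewrite /= mon_rowp //; first by rewrite monicMl mon_monic.
by rewrite size_monicM ?mon_neq0 ?mon_monic // !size_mon addSn addnS /= subnKC.
Qed.

Lemma phi2 n k z : (k <= n)%N -> pol (phi n k z).2 = mon z.1 * pol z.2.2.
Proof.
move=> hk; rewrite /= pol_rowp //.
apply: (leq_trans (size_mul_leq _ _)); rewrite size_mon addSn /=.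
have := size_pol z.2.2 => h; rewrite -[X in (_ <= X)%N](subnKC hk) leq_add2l //.
Qed.

Lemma gcd_phi n k z : (k <= n)%N -> coprimep (mon z.2.1) (pol z.2.2) ->
  gcdp (mon (phi n k z).1) (pol (phi n k z).2) %= mon z.1.
Proof.
move=> hk cop; rewrite phi1 // phi2 //.
apply: eqp_trans (gcdp_mul2l _ _ _) _.
rewrite -{2}(mulr1 (mon z.1)); apply: eqp_mull.
by rewrite gcdp_eqp1.
Qed.

Lemma card_Efib n k : (k <= n)%N -> #|Efib n k| = (q ^ k * Ncop (n - k))%N.
Proof.
move=> hk.
have -> : Efib n k = phi n k @: setX [set: 'rV[F]_k] (Ecop (n - k)).
  apply/setP => x; apply/idP/idP.
    rewrite inE => /eqP sg.
    set P := mon x.1; set R := pol x.2; set g := gcdp P R.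
    have P0 : P != 0 by apply: mon_neq0.
    have g0 : g != 0 by rewrite gcdp_eq0 negb_and P0.
    have lg0 : lead_coef g != 0 by rewrite lead_coef_eq0.
    set g' := (lead_coef g)^-1 *: g.
    have li0 : (lead_coef g)^-1 != 0 by rewrite invr_eq0.
    have mg' : g' \is monic by rewrite monicE lead_coefZ mulVf.
    have sg' : size g' = k.+1 by rewrite size_scale.
    have g'0 : g' != 0 by rewrite -size_poly_eq0 sg'.
    have dP : g' %| P by rewrite dvdpZl // dvdp_gcdl.
    have dR : g' %| R by rewrite dvdpZl // dvdp_gcdr.
    have sPd : size (P %/ g') = (n - k).+1.
      by rewrite size_divp // sg' size_mon /= subSn.
    have mPd : P %/ g' \is monic.
      have := mon_monic x.1; rewrite -/P -{1}(divpK dP) !monicE lead_coefM.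
      by move: mg'; rewrite monicE => /eqP ->; rewrite mulr1.
    have sRd : (size (R %/ g')%R <= n - k)%N.
      rewrite size_divp // sg' /=; apply: leq_sub2r; apply: size_pol.
    apply/imsetP; exists (rowp k (g' - 'X^k),
        (rowp (n - k) (P %/ g' - 'X^(n - k)), rowp (n - k) (R %/ g'))).
      rewrite inE /= inE /= inE /= mon_rowp // pol_rowp //.
      rewrite /g' !divpZr ?invrK // coprimepZl ?coprimepZr ?lead_coef_eq0 //.
      by apply: coprimep_div_gcd; rewrite P0.
    rewrite /phi /= !mon_rowp // ?size_sub_monic // pol_rowp //.
    rewrite mulrC divpK // [g' * _]mulrC divpK //.
    rewrite /P /mon addrC addKr.
    rewrite /R !rowp_pol. by case: x {sg P R g P0 g0 lg0 g' li0 mg' sg' g'0 dP dR sPd mPd sRd}.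
  case/imsetP => z; rewrite !inE /= => cz ->.
  by rewrite (eqp_size (gcd_phi hk cz)) size_mon.
rewrite card_in_imset.
  by rewrite cardsX cardsT card_mx mul1n.
move=> z1 z2; rewrite !inE /= => c1 c2 e.
have e1 : mon z1.1 * mon z1.2.1 = mon z2.1 * mon z2.2.1.
  by rewrite -!phi1 // e.
have e2 : mon z1.1 * pol z1.2.2 = mon z2.1 * pol z2.2.2.
  by rewrite -!phi2 // e.
have ed : z1.1 = z2.1.
  apply: mon_inj; apply/eqP; rewrite -eqp_monic ?mon_monic //.
  have h1 := gcd_phi hk c1; have h2 := gcd_phi hk c2.
  rewrite e eqp_sym in h1; exact: eqp_trans h1 h2.
move: e1 e2 c1 c2; clear e; case: z1 ed => d1 [a1 b1]; case: z2 => d2 [a2 b2] /= <-.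
move=> /(mulfI (mon_neq0 _)) /mon_inj -> /(mulfI (mon_neq0 _)) /pol_inj -> //.
Qed.

End Rec.

Section Rec2.
Variable F : finFieldType.
Local Notation q := #|F|.

Lemma rec_cop n : (q ^ (2 * n) = \sum_(k < n.+1) q ^ k * Ncop F (n - k))%N.
Proof.
have -> : (q ^ (2 * n) = #|[set: 'rV[F]_n * 'rV[F]_n]|)%N.
  by rewrite cardsT card_prod card_mx mul1n -expnD addnn mul2n.
rewrite -sum1_card.
have h : forall x : 'rV[F]_n * 'rV[F]_n,
    (1 = \sum_(k < n.+1) (if x \in Efib F n k then 1 else 0))%N.
  move=> x; set s := size (gcdp (mon x.1) (pol x.2)).
  have s0 : (0 < s)%N.
    by rewrite lt0n size_poly_eq0 gcdp_eq0 negb_and mon_neq0.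
  have sn : (s <= n.+1)%N.
    rewrite -(size_mon x.1); apply: dvdp_leq; first exact: mon_neq0.
    exact: dvdp_gcdl.
  have hk : (s.-1 < n.+1)%N by rewrite prednK.
  rewrite (bigD1 (Ordinal hk)) //= inE prednK // eqxx big1 // => k.
  rewrite inE -val_eqE /= => /negbTE hne.
  case: eqP => // e; move: hne; rewrite /s e /= eqxx //.
rewrite (eq_bigr (fun x => \sum_(k < n.+1) (if x \in Efib F n k then 1 else 0))%N);
  last by move=> x _; apply: h.
rewrite exchange_big /=; apply: eq_bigr => k _.
rewrite -card_Efib; last by rewrite -ltnS.
rewrite -sum1_card [RHS]big_mkcond [LHS]big_mkcond /=; apply: eq_bigr => x _; by rewrite inE.
Qed.

Lemma Ncop0 : Ncop F 0 = 1%N.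
Proof.
have := rec_cop 0; rewrite big_ord1 /= muln0 expn0 mul1n subn0.
by move=> ->.
Qed.

Lemma Ncop_S n : (Ncop F n.+1 + q ^ (2 * n).+1 = q ^ (2 * n.+1))%N.
Proof.
rewrite (rec_cop n.+1) big_ord_recl /= subn0 expn0 mul1n; congr (_ + _)%N.
rewrite expnS (rec_cop n) big_distrr /=; apply: eq_bigr => k _.
by rewrite /bump /= add1n subSS expnS mulnA.
Qed.

End Rec2.


Section Obs.
Variable F : finFieldType.

Definition compmx n (w : 'rV[F]_n) : 'M[F]_n :=
  \matrix_(i, j) if (j.+1 < n)%N then ((i : nat) == j.+1)%:R else - w 0 i.
Definition colp n (v : 'cV[F]_n) : {poly F} := pol v^T.
Definition chi n (w u : 'rV[F]_n) : 'rV[F]_n :=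
  \row_j ((('X^j * pol u) %% mon w)`_n.-1).

Lemma pol0 n : pol (0 : 'rV[F]_n) = 0.
Proof. by rewrite /pol big1 // => i _; rewrite mxE scale0r. Qed.

Lemma colp_eq0 n (v : 'cV[F]_n) : (colp v == 0) = (v == 0).
Proof.
apply/eqP/eqP => [h|->]; last by rewrite /colp trmx0 pol0.
by apply: trmx_inj; rewrite trmx0; apply: pol_inj; rewrite pol0.
Qed.

Lemma coef_colp n (v : 'cV[F]_n) i (hi : (i < n)%N) : (colp v)`_i = v (Ordinal hi) 0.
Proof. by rewrite /colp coef_pol_lt mxE. Qed.

Lemma size_colp n (v : 'cV[F]_n) : (size (colp v) <= n)%N.
Proof. exact: size_pol. Qed.

Variable m : nat.
Local Notation n := m.+1.

Lemma compmx_step (w : 'rV[F]_n) (v : 'cV[F]_n) :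
  colp (compmx w *m v) = ('X * colp v) %% mon w.
Proof.
set f := colp v; set c := v ord_max 0.
have -> : 'X * f = c%:P * mon w + ('X * f - c *: mon w).
  by rewrite mul_polyC addrC subrK.
rewrite modp_addl_mul_small; last first.
  rewrite size_mon ltnS; apply/leq_sizeP => j hj.
  rewrite coefB coefZ coefXM; case: (ltngtP j n) => [|hjn|ejn].
  - by rewrite ltnNge hj.
  - rewrite !nth_default ?size_mon ?mulr0 ?subr0 //.
      by case: j hj hjn => //.
    by apply: (leq_trans (size_colp v)); case: j hj hjn.
  - subst j; rewrite /= (coef_colp _ (ltnSn m)) /mon coefD coefXn eqxx.
    by rewrite coef_pol_ge // addr0 mulr1 /c subrr.
apply/polyP => i; rewrite coefB coefZ coefXM /mon coefD coefXn.
case: (ltnP i n) => hi; last first.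
  rewrite /colp [X in X = _]coef_pol_ge // -/(colp v) -/f (coef_pol_ge w hi) addr0.
  case: i hi => // i hi /=; rewrite eqSS.
  case: (ltngtP i m) => him; first by move: hi; rewrite ltnS leqNgt him.
    by rewrite mulr0 subr0 nth_default // (leq_trans (size_colp v)).
  by subst i; rewrite mulr1 (coef_colp _ (ltnSn m)) subrr.
rewrite (coef_colp _ hi) mxE big_ord_recr /=.
rewrite [compmx w (Ordinal hi) ord_max]mxE /= ltnn.
rewrite (coef_pol_lt _ hi) (ltn_eqF hi) add0r mulNr [c * _]mulrC.
congr (_ - _).
case: i hi => [|i] hi /=.
  by rewrite big1 // => j _; rewrite mxE /= ltnS ltn_ord mul0r.
have hi' : (i < m)%N by [].
rewrite (bigD1 (Ordinal hi')) //= big1 ?addr0.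
  rewrite mxE /= ltnS hi' eqxx mul1r (coef_colp _ (ltnW hi)).
  by congr (v _ 0); apply: val_inj.
move=> j; rewrite -val_eqE /= => hj; rewrite mxE /= ltnS ltn_ord eqSS.
by rewrite eq_sym (negbTE hj) mul0r.
Qed.


Lemma compmx_pow (w : 'rV[F]_n) (v : 'cV[F]_n) i :
  colp ((compmx w ^+ i) *m v) = ('X^i * colp v) %% mon w.
Proof.
elim: i => [|i IH].
  by rewrite expr0 mul1mx expr0 mul1r modp_small // size_mon ltnS size_colp.
rewrite exprS -mulmxA compmx_step IH modp_mul exprS mulrA.
by [].
Qed.

Lemma chi_mul (w u : 'rV[F]_n) (v : 'cV[F]_n) :
  (chi w u *m v) 0 0 = ((colp v * pol u) %% mon w)`_m.
Proof.
rewrite mxE /colp /pol mulr_suml.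
rewrite (big_morph (fun x => x %% mon w) (fun a b => modpD (mon w) a b) (mod0p _)).
rewrite coef_sum; apply: eq_bigr => j _.
by rewrite mxE -scalerAl modpZl coefZ !mxE mulrC.
Qed.

Lemma modp_test (p s : {poly F}) : size p = n.+1 ->
  (forall i, (i < n)%N -> (('X^i * s) %% p)`_m = 0) -> s %% p = 0.
Proof.
move=> sp h; case: (eqVneq (s %% p) 0) => // t0; exfalso.
set t := s %% p in t0.
have st : (size t <= n)%N.
  by rewrite -ltnS -sp ltn_modp -size_poly_gt0 sp.
have st0 : (0 < size t)%N by rewrite size_poly_gt0.
set d := (size t).-1.
have dm : (d <= m)%N by rewrite /d -ltnS prednK.
have hi : (m - d < n)%N by rewrite ltnS leq_subr.
have := h _ hi; rewrite -modp_mul -/t modp_small; last first.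
  rewrite sp; apply: (leq_trans (size_mul_leq _ _)).
  by rewrite size_polyXn addSn /= -(prednK st0) addnS ltnS -/d subnK.
rewrite coefXnM ltnNge leq_subr /= subKn // => /eqP.
by rewrite -/(lead_coef t) lead_coef_eq0 (negbTE t0).
Qed.


Lemma ker_unit k (A : 'M[F]_k) :
  (forall v : 'cV[F]_k, A *m v = 0 -> v = 0) -> A \in unitmx.
Proof.
move=> H; rewrite -unitmx_tr -row_free_unit; apply: inj_row_free => v h.
apply: trmx_inj; rewrite trmx0; apply: H; apply: trmx_inj.
by rewrite trmx_mul trmxK h trmx0.
Qed.

Lemma obs_ker (w u : 'rV[F]_n) (B : 'cV[F]_n) (v : 'cV[F]_n) :
  (obs_mx ((compmx w, B, chi w u) : triple F n) *m v == 0) =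
  ((colp v * pol u) %% mon w == 0).
Proof.
have E : forall i : 'I_n, (obs_mx ((compmx w, B, chi w u) : triple F n) *m v) i 0
    = (('X^i * (colp v * pol u)) %% mon w)`_m.
  move=> i; rewrite mxE.
  have -> : \sum_j obs_mx ((compmx w, B, chi w u) : triple F n) i j * v j 0
      = ((chi w u *m (compmx w ^+ i)) *m v) 0 0.
    by rewrite mxE; apply: eq_bigr => j _; rewrite mxE.
  rewrite -mulmxA chi_mul compmx_pow mulrC modp_mul.
  by rewrite mulrC -mulrA.
apply/eqP/eqP => h.
  apply: (modp_test (size_mon w)) => i hi.
  by rewrite -(E (Ordinal hi)) h mxE.
apply/matrixP => i j; rewrite (ord1 j) E mxE.
by rewrite -modp_mul h mulr0 mod0p coef0.
Qed.

Lemma obs_cop (w u : 'rV[F]_n) (B : 'cV[F]_n) :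
  completely_observable ((compmx w, B, chi w u) : triple F n) =
  coprimep (mon w) (pol u).
Proof.
rewrite /completely_observable; apply/idP/idP => H.
  apply: contraTT H => ncop.
  set p := mon w; set r := pol u; set g := gcdp p r.
  have p0 : p != 0 by apply: mon_neq0.
  have g0 : g != 0 by rewrite gcdp_eq0 negb_and p0.
  have sg : size g != 1%N by rewrite size_poly_eq1 gcdp_eqp1.
  have sg2 : (1 < size g)%N.
    by move: sg g0; rewrite -size_poly_eq0; case: (size g) => [|[]].
  set f := p %/ g.
  have sf : size f = (n.+1 - (size g).-1)%N by rewrite size_divp // size_mon.
  have sfn : (size f <= n)%N.
    by rewrite sf leq_subLR -[X in (X < _)%N]add0n ltn_add2r -subn1 subn_gt0.
  have f0 : f != 0.
    rewrite -size_poly_eq0 sf subn_eq0 -ltnNge.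
    have := dvdp_leq p0 (dvdp_gcdl p r); rewrite -/g size_mon.
    by case: (size g) sg2 => // k _; rewrite ltnS.
  apply/negP => U.
  have : (rowp n f)^T == 0.
    rewrite -colp_eq0 -(mulKmx U ((rowp n f)^T)).
    have -> : obs_mx ((compmx w, B, chi w u) : triple F n) *m (rowp n f)^T = 0.
      apply/eqP; rewrite obs_ker /colp trmxK pol_rowp //.
      rewrite -/r -(divpK (dvdp_gcdr p r)) -/g /f mulrA [_ * (r %/ g)]mulrC.
      by rewrite -mulrA divpK ?dvdp_gcdl // modp_mull.
    by rewrite mulmx0 /colp trmx0 pol0.
  by rewrite -colp_eq0 /colp trmxK pol_rowp // (negbTE f0).
apply: ker_unit => v /eqP; rewrite obs_ker => /eqP /modp_eq0P.
rewrite Gauss_dvdpl // => d; apply/eqP; rewrite -colp_eq0.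
apply: contraT => f0; have := dvdp_leq f0 d.
by rewrite size_mon ltnNge size_colp.
Qed.


Lemma chi_inj (w : 'rV[F]_n) : injective (chi w).
Proof.
move=> u1 u2 e; apply: pol_inj; apply/eqP; rewrite -subr_eq0; apply/eqP.
rewrite -[LHS](@modp_small _ _ (mon w)); last first.
  by rewrite size_mon ltnS (leq_trans (size_add _ _)) // geq_max size_opp !size_pol.
apply: (modp_test (size_mon w)) => i hi.
have := congr1 (fun r : 'rV[F]_n => r 0 (Ordinal hi)) e; rewrite /= !mxE /=.
by rewrite mulrBr modpD modpN coefB => ->; rewrite subrr.
Qed.

Lemma card_cob (B : 'cV[F]_n) :
  #|[set x : 'rV[F]_n * 'rV[F]_n |
      completely_observable ((compmx x.1, B, x.2) : triple F n)]| = Ncop F n.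
Proof.
set S := [set x : 'rV[F]_n * 'rV[F]_n | _].
pose psi (x : 'rV[F]_n * 'rV[F]_n) := (x.1, chi x.1 x.2).
have pi : injective psi.
  move=> [a b] [c d] [/= ac]; subst c => /chi_inj -> //.
rewrite -(card_preimset S pi) /Ncop; apply: eq_card => x.
by rewrite !inE /= obs_cop.
Qed.

End Obs.


Section Act.
Variable F : finFieldType.
Variable n : nat.
Implicit Types (g h : 'M[F]_n) (s t : triple F n).

Lemma invmxM' g h : g \in unitmx -> h \in unitmx ->
  invmx (g *m h) = invmx h *m invmx g.
Proof.
move=> ug uh; have U : g *m h \in unitmx by rewrite unitmx_mul ug uh.
have E : (g *m h) *m (invmx h *m invmx g) = 1%:M.
  by rewrite mulmxA -(mulmxA g) mulmxV // mulmx1 mulmxV.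
by rewrite -[RHS](mulKmx U) E mulmx1.
Qed.

Lemma act_comp g h s : g \in unitmx -> h \in unitmx ->
  gl_act g (gl_act h s) = gl_act (g *m h) s.
Proof.
move=> ug uh; rewrite /gl_act /trA /trB /trC /= invmxM' //.
by rewrite !mulmxA.
Qed.

Lemma act1 s : gl_act 1%:M s = s.
Proof.
by case: s => [[A B] C]; rewrite /gl_act /trA /trB /trC /= invmx1 mul1mx !mulmx1 mul1mx.
Qed.

Lemma conj_pow g (A : 'M[F]_n) j : g \in unitmx ->
  (g *m A *m invmx g) ^+ j = g *m (A ^+ j) *m invmx g.
Proof.
move=> ug; elim: j => [|j IH].
  rewrite !expr0; change (1 : 'M[F]_n) with (1%:M : 'M[F]_n); by rewrite mulmx1 mulmxV.
rewrite !exprS IH -!mulmxE !mulmxA; congr (_ *m _).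
by rewrite -(mulmxA _ (invmx g)) mulVmx // mulmx1.
Qed.

Lemma ctrl_act g s : g \in unitmx -> ctrl_mx (gl_act g s) = g *m ctrl_mx s.
Proof.
move=> ug; apply/matrixP => i j; rewrite [LHS]mxE /trA /trB /= conj_pow //.
have -> : g *m trA s ^+ j *m invmx g *m (g *m trB s) = g *m (trA s ^+ j *m trB s).
  rewrite !mulmxA -(mulmxA (g *m trA s ^+ j) (invmx g) g) mulVmx // mulmx1.
  by rewrite -mulmxA.
by rewrite !mxE; apply: eq_bigr => k _; rewrite [ctrl_mx _ _ _]mxE.
Qed.

Lemma obs_act g s : g \in unitmx -> obs_mx (gl_act g s) = obs_mx s *m invmx g.
Proof.
move=> ug; apply/matrixP => i j; rewrite [LHS]mxE /trA /trC /= conj_pow //.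
have -> : trC s *m invmx g *m (g *m trA s ^+ i *m invmx g) = trC s *m trA s ^+ i *m invmx g.
  rewrite !mulmxA -(mulmxA (trC s) (invmx g) g).
  by rewrite mulVmx // mulmx1.
by rewrite !mxE; apply: eq_bigr => k _; rewrite !mxE.
Qed.

Lemma cc_act g s : g \in unitmx ->
  completely_controllable (gl_act g s) = completely_controllable s.
Proof.
by move=> ug; rewrite /completely_controllable ctrl_act // unitmx_mul ug.
Qed.

Lemma co_act g s : g \in unitmx ->
  completely_observable (gl_act g s) = completely_observable s.
Proof.
by move=> ug; rewrite /completely_observable obs_act // unitmx_mul unitmx_inv ug andbT.
Qed.

Definition Uset : {set 'M[F]_n} := [set g | g \in unitmx].
Definition Sset : {set triple F n} :=
  [set s | completely_controllable s || completely_observable s].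

Lemma orbitE s : gl_orbit s = (fun g => gl_act g s) @: Uset.
Proof.
apply/setP => t; rewrite inE; apply/existsP/imsetP => [[g /andP [ug /eqP ->]]|[g]].
  by exists g; rewrite ?inE.
by rewrite inE => ug ->; exists g; rewrite ug eqxx.
Qed.

Lemma orbit_card s : s \in Sset -> #|gl_orbit s| = #|Uset|.
Proof.
rewrite inE orbitE => hs; apply: card_in_imset => g h; rewrite !inE => ug uh e.
case/orP: hs => [cc|co].
  have := ctrl_act s ug; rewrite e ctrl_act // => /(congr1 (mulmx^~ (invmx (ctrl_mx s)))).
  by rewrite !mulmxK.
have := obs_act s ug; rewrite e obs_act // => /(congr1 (mulmx (invmx (obs_mx s)))).
by rewrite !mulKmx // => /(congr1 invmx); rewrite !invmxK.
Qed.

Lemma orbit_self s : s \in gl_orbit s.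
Proof. by rewrite orbitE; apply/imsetP; exists 1%:M; rewrite ?inE ?unitmx1 ?act1. Qed.

Lemma orbit_sub s t : t \in gl_orbit s -> gl_orbit t \subset gl_orbit s.
Proof.
rewrite orbitE => /imsetP [g]; rewrite inE => ug ->.
apply/subsetP => x; rewrite !orbitE => /imsetP [h]; rewrite inE => uh ->.
by apply/imsetP; exists (h *m g); rewrite ?inE ?unitmx_mul ?uh ?ug ?act_comp.
Qed.

Lemma orbit_eq s t : t \in gl_orbit s -> gl_orbit t = gl_orbit s.
Proof.
move=> ht; apply/eqP; rewrite eqEsubset orbit_sub //=.
apply: orbit_sub; move: ht; rewrite orbitE => /imsetP [g]; rewrite inE => ug ->.
rewrite orbitE; apply/imsetP; exists (invmx g); rewrite ?inE ?unitmx_inv //.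
by rewrite act_comp ?unitmx_inv // mulVmx // act1.
Qed.

Lemma num_free : (num_sys_points F n * #|Uset| = #|Sset|)%N.
Proof.
have memP : forall A, A \in sys_points F n -> exists2 s, s \in Sset & A = gl_orbit s.
  by move=> A /imsetP [s hs ->]; exists s; rewrite // inE.
have memP' : forall s, s \in Sset -> gl_orbit s \in sys_points F n.
  by move=> s hs; apply/imsetP; exists s; rewrite // inE; rewrite inE in hs.
symmetry; apply: card_uniform_partition.
  by move=> A /memP [s hs ->]; apply: orbit_card.
apply/and3P; split.
- apply/eqP/setP => t; apply/bigcupP/idP => [[A /memP [s hs ->] ht]|ht].
    move: hs ht; rewrite orbitE => hs /imsetP [g]; rewrite inE => ug ->; rewrite inE in hs; rewrite inE.
    by rewrite cc_act // co_act.
  by exists (gl_orbit t); [apply: memP' | apply: orbit_self].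
- apply/trivIsetP => A B /memP [s hs ->] /memP [s' hs' ->] neq.
  rewrite -setI_eq0; apply/eqP/setP => t; rewrite inE [in RHS]inE.
  apply/negP => /andP [h1 h2]; move: neq.
  by rewrite -(orbit_eq h1) -(orbit_eq h2) eqxx.
- apply/negP => /memP [s _ e].
  by have := orbit_self s; rewrite -e inE.
Qed.

End Act.


Section Tr.
Variable F : finFieldType.
Variable n : nat.

Lemma tr_pow (A : 'M[F]_n) i : (A^T) ^+ i = (A ^+ i)^T.
Proof.
elim: i => [|i IH].
  by rewrite !expr0; change (1 : 'M[F]_n) with (1%:M : 'M[F]_n); rewrite trmx1.
by rewrite exprS IH exprSr -!mulmxE trmx_mul.
Qed.

Definition trt (s : triple F n) : triple F n := ((trA s)^T, (trC s)^T, (trB s)^T).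

Lemma trtK : involutive trt.
Proof. by case=> [[A B] C]; rewrite /trt /trA /trB /trC /= !trmxK. Qed.

Lemma obs_trt s : obs_mx (trt s) = (ctrl_mx s)^T.
Proof.
apply/matrixP => i j; rewrite !mxE /trt /trA /trB /trC /= tr_pow.
by apply: eq_bigr => k _; rewrite !mxE mulrC.
Qed.

Lemma card_co_cc :
  #|[set s : triple F n | completely_observable s]| =
  #|[set s : triple F n | completely_controllable s]|.
Proof.
rewrite -(card_preimset _ (can_inj trtK)); apply: eq_card => s.
by rewrite !inE /completely_observable /completely_controllable obs_trt unitmx_tr.
Qed.

End Tr.

Section CC.
Variable F : finFieldType.
Variable m : nat.
Local Notation n := m.+1.

Definition ej (j : nat) : 'cV[F]_n := \col_(i < n) ((i : nat) == j)%:R.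

Lemma mul_ej (A : 'M[F]_n) (j : 'I_n) i : (A *m ej j) i 0 = A i j.
Proof.
rewrite mxE (bigD1 j) //= big1 ?addr0; first by rewrite mxE eqxx mulr1.
by move=> k; rewrite mxE -val_eqE => /negbTE ->; rewrite mulr0.
Qed.

Lemma comp_pow_e (w : 'rV[F]_n) j : (j < n)%N -> compmx w ^+ j *m ej 0 = ej j.
Proof.
elim: j => [|j IH] hj.
  by rewrite expr0; change (1 : 'M[F]_n) with (1%:M : 'M[F]_n); rewrite mul1mx.
rewrite exprS -mulmxE -mulmxA IH ?(ltnW hj) //.
apply/matrixP => i k; rewrite (ord1 k).
have -> : j = Ordinal (ltnW hj) by [].
by rewrite mul_ej !mxE /= hj.
Qed.

Lemma ctrl_comp (w c : 'rV[F]_n) :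
  ctrl_mx ((compmx w, ej 0, c) : triple F n) = 1%:M.
Proof.
apply/matrixP => i j; rewrite [LHS]mxE /trA /trB /= comp_pow_e // !mxE.
by rewrite val_eqE.
Qed.

Definition Psi (z : 'M[F]_n * ('rV[F]_n * 'rV[F]_n)) : triple F n :=
  gl_act z.1 (compmx z.2.1, ej 0, z.2.2).

Lemma Psi_inj : {in setX (Uset F n) setT &, injective Psi}.
Proof.
move=> [K1 [w1 c1]] [K2 [w2 c2]]; rewrite !inE !andbT /= => u1 u2 e.
have eK : K1 = K2.
  have := ctrl_act (compmx w1, ej 0, c1) u1; rewrite -/(Psi (K1, (w1, c1))) e.
  by rewrite /Psi /= ctrl_act // !ctrl_comp !mulmx1.
subst K2.
have := congr1 (gl_act (invmx K1)) e; rewrite /Psi /= !act_comp ?unitmx_inv //.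
rewrite mulVmx // !act1 => -[ew ec].
suff -> : w1 = w2 by rewrite ec.
apply/rowP => i; have := congr1 (fun M : 'M[F]_n => M i ord_max) ew.
by rewrite !mxE /= ltnn => /oppr_inj.
Qed.

Lemma Psi_surj (s : triple F n) : completely_controllable s ->
  s = Psi (ctrl_mx s, (\row_i - (trA (gl_act (invmx (ctrl_mx s)) s)) i ord_max,
                       trC (gl_act (invmx (ctrl_mx s)) s))).
Proof.
rewrite /completely_controllable => uK.
set K := ctrl_mx s; set s0 := gl_act (invmx K) s.
have c0 : ctrl_mx s0 = 1%:M by rewrite ctrl_act ?unitmx_inv // mulVmx.
have E : forall j : 'I_n, trA s0 ^+ j *m trB s0 = ej j.
  move=> j; apply/matrixP => i k; rewrite (ord1 k).
  have := congr1 (fun M : 'M[F]_n => M i j) c0; rewrite !mxE => ->.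
  by rewrite val_eqE.
have B0 : trB s0 = ej 0.
  have := E ord0; rewrite expr0.
  by change (1 : 'M[F]_n) with (1%:M : 'M[F]_n); rewrite mul1mx.
have A0 : trA s0 = compmx (\row_i - trA s0 i ord_max).
  have XS : forall k, trA s0 *m trA s0 ^+ k = trA s0 ^+ k.+1.
    by move=> k; rewrite exprS -mulmxE.
  apply/matrixP => i j; rewrite [compmx _ i j]mxE.
  case: ifP => hj.
    rewrite -mul_ej -(E j) mulmxA XS.
    by rewrite (E (Ordinal hj)) mxE.
  rewrite [(\row_i0 _) 0 i]mxE.
  rewrite opprK; congr (trA s0 i _); apply: val_inj => /=.
  move: (ltn_ord j) (negbT hj); rewrite !ltnS => a b; apply/eqP; by rewrite eqn_leq a leqNgt b.
have EQ : s0 = (compmx (\row_i - trA s0 i ord_max), ej 0, trC s0).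
  by move: A0 B0; case: (s0) => [[A B] C] /= <- <-.
rewrite /Psi /= -EQ /s0 act_comp ?unitmx_inv // mulmxV // act1.
by [].
Qed.


Lemma Psi_cc z : z.1 \in unitmx -> completely_controllable (Psi z).
Proof.
by move=> u; rewrite /Psi cc_act // /completely_controllable ctrl_comp unitmx1.
Qed.

Lemma Psi_co z : z.1 \in unitmx ->
  completely_observable (Psi z) =
  completely_observable ((compmx z.2.1, ej 0, z.2.2) : triple F n).
Proof. by move=> u; rewrite /Psi co_act. Qed.

Lemma Psi_ex s : completely_controllable s ->
  exists2 z, z.1 \in unitmx & s = Psi z.
Proof. by move=> h; eexists; last exact: Psi_surj h; rewrite /=. Qed.

Lemma card_cc :
  #|[set s : triple F n | completely_controllable s]| =
  (#|Uset F n| * #|F| ^ (2 * n))%N.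
Proof.
have -> : [set s : triple F n | completely_controllable s] =
          Psi @: setX (Uset F n) setT.
  apply/setP => s; rewrite inE; apply/idP/imsetP => [h|[z]].
    by case: (Psi_ex h) => z u E; exists z; rewrite // !inE andbT.
  by rewrite !inE andbT => u ->; apply: Psi_cc.
rewrite card_in_imset; last exact: Psi_inj.
by rewrite cardsX cardsT card_prod !card_mx !mul1n -expnD addnn mul2n.
Qed.

Lemma card_both :
  #|[set s : triple F n | completely_controllable s && completely_observable s]| =
  (#|Uset F n| * Ncop F n)%N.
Proof.
set Cob := [set x : 'rV[F]_n * 'rV[F]_n |
      completely_observable ((compmx x.1, ej 0, x.2) : triple F n)].
have -> : [set s : triple F n | completely_controllable s && completely_observable s] =
          Psi @: setX (Uset F n) Cob.
  apply/setP => s; rewrite inE; apply/idP/imsetP => [/andP [h1 h2]|[z]].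
    case: (Psi_ex h1) => z u E; exists z => //.
    by rewrite !inE u /= -Psi_co // -E.
  rewrite !inE => /andP [u c] ->.
  by rewrite Psi_cc // Psi_co.
rewrite card_in_imset.
  by rewrite cardsX card_cob.
move=> z1 z2 h1 h2; apply: Psi_inj.
  by move: h1; rewrite !inE => /andP [-> _].
by move: h2; rewrite !inE => /andP [-> _].
Qed.

Lemma num_pos :
  (num_sys_points F n * #|Uset F n| + #|Uset F n| * Ncop F n =
   #|Uset F n| * #|F| ^ (2 * n) + #|Uset F n| * #|F| ^ (2 * n))%N.
Proof.
rewrite num_free -card_both -card_cc -{2}card_co_cc -cardsUI.
congr (_ + _)%N; apply: eq_card => s; rewrite !inE //.
Qed.

End CC.


Lemma num_S (F : finFieldType) m :
  num_sys_points F m.+1 = (#|F| ^ (2 * m.+1) + #|F| ^ (2 * m.+1 - 1))%N.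
Proof.
have U0 : (0 < #|Uset F m.+1|)%N.
  by apply/card_gt0P; exists 1%:M; rewrite inE unitmx1.
have h := @num_pos F m.
have h2 := @Ncop_S F m.
have e : (2 * m.+1 - 1 = (2 * m).+1)%N by rewrite mulnS add2n subn1.
rewrite e.
apply/eqP; rewrite -(eqn_pmul2r U0); apply/eqP.
apply: (@addIn (#|Uset F m.+1| * Ncop F m.+1)%N); rewrite h.
rewrite -h2 [X in (_ + X)%N]mulnDr addnA [(#|Uset F m.+1| * Ncop F m.+1)%N]mulnC.
move: (#|Uset F m.+1|) (Ncop F m.+1) (#|F| ^ (2 * m).+1)%N => a b c; nia.
Qed.


Lemma num0 (F : finFieldType) : num_sys_points F 0 = 1%N.
Proof.
apply/eqP; rewrite eqn_leq; apply/andP; split.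
  rewrite /num_sys_points /sys_points.
  apply: (leq_trans (leq_imset_card _ _)).
  apply: (leq_trans (max_card _)).
  by rewrite !card_prod !card_mx !muln0 !mul0n.
apply/card_gt0P; exists (gl_orbit (0 : triple F 0)).
apply/imsetP; exists 0 => //.
by rewrite inE /completely_controllable unitmxE det_mx00 unitr1.
Qed.

Local Close Scope ring_scope.

Theorem mainTheorem3 :
  forall (F : finFieldType),
    let q := #|F| in
    [/\ num_sys_points F 0 = 1,
        (forall n : nat, (0 < n)%N ->
           num_sys_points F n = (q ^ (2 * n) + q ^ (2 * n - 1))%N)
      & (forall N : nat,
           (\sum_(n < N.+1) num_sys_points F n)%N = (\sum_(k < (2 * N).+1) q ^ k)%N)].
Proof.
move=> F q; split.
- exact: num0.
- by case=> // m _; apply: num_S.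
elim=> [|N IH].
  by rewrite !big_ord1 num0.
rewrite big_ord_recr /= IH num_S.
have -> : (2 * N.+1).+1 = ((2 * N).+1).+2 by rewrite mulnS add2n.
rewrite (big_ord_recr (2 * N).+2) (big_ord_recr (2 * N).+1) /= -addnA.
congr (_ + _)%N.
have -> : (2 * N.+1 - 1 = (2 * N).+1)%N by rewrite mulnS add2n subn1.
by rewrite mulnS add2n addnC.
Qed.
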